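(* Let $0\le\lambda<\gamma\le\delta$. If $F\in\mathcal{R}(\gamma,\delta,\lambda)$, then $\mathrm{Re}\left\{\frac{F(z)}{z}\right\}>\frac12$ for all $z\in\mathcal{U}$.
   Context: Let $\mathcal{U}=\{z\in\mathbb{C}:|z|<1\}$ and let $\mathcal{A}$ be the class of analytic functions $F$ in $\mathcal{U}$ with $F(0)=0$, $F'(0)=1$. For real $0\le\lambda<\gamma\le\delta$, $\mathcal{R}(\gamma,\delta,\lambda)$ is the class of $F\in\mathcal{A}$ such that $\mathrm{Re}\{\gamma F'(z)+\delta zF''(z)+\frac{\delta-\gamma}{2}z^2F'''(z)\}>\lambda$ for all $z\in\mathcal{U}$. Here $F(z)/z$ at $z=0$ means its limiting value $1$. *)

(* Defs.v *)
From Stdlib Require Import Reals.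
From Coquelicot Require Import Coquelicot.
Open Scope R_scope.

Definition in_U (z : C) : Prop := Cmod z < 1.

Definition cderiv_on_U (f f' : C -> C) : Prop :=
  forall z : C, in_U z -> @is_derive C_AbsRing C_NormedModule f z (f' z).

(** [F] is analytic in U, with first, second and third derivatives
    [F1], [F2], [F3] on U. (Holomorphic on an open set = analytic.) *)
Definition analytic_U_with_derivs (F F1 F2 F3 : C -> C) : Prop :=
  cderiv_on_U F F1 /\ cderiv_on_U F1 F2 /\ cderiv_on_U F2 F3.

Definition classA (F F1 F2 F3 : C -> C) : Prop :=
  analytic_U_with_derivs F F1 F2 F3 /\ F 0 = 0 /\ F1 0 = 1.

Definition classR (gamma delta lambda : R) (F F1 F2 F3 : C -> C) : Prop :=
  classA F F1 F2 F3 /\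
  forall z : C, in_U z ->
    Re (RtoC gamma * F1 z + RtoC delta * z * F2 z
        + RtoC ((delta - gamma) / 2) * (z * z) * F3 z) > lambda.

(** F(z)/z, with its limiting value 1 at z = 0. *)
Definition Fquot (F : C -> C) (z : C) : C :=
  if Ceq_dec z 0 then 1 else F z / z.

(* Main.v *)
Require Import Defs.
From Stdlib Require Import Reals Lra Psatz.
From Coquelicot Require Import Coquelicot.
Open Scope R_scope.

Ltac cunf := repeat progress (unfold Cminus, Cplus, Copp, Cmult, minus, plus, opp, scal, mult, prod_plus, prod_opp, prod_scal, zero, one; simpl).

Definition hd (f : C -> C) (z l : C) := @is_derive C_AbsRing C_NormedModule f z l.
Definition rd (g : R -> C) (t : R) (v : C) := @is_derive R_AbsRing C_R_NormedModule g t v.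

Lemma Cmod_fst_le (x : C) : Rabs (fst x) <= Cmod x.
Proof. generalize (Rmax_Cmod x). generalize (Rmax_l (Rabs (fst x)) (Rabs (snd x))). lra. Qed.
Lemma Cmod_snd_le (x : C) : Rabs (snd x) <= Cmod x.
Proof. generalize (Rmax_Cmod x). generalize (Rmax_r (Rabs (fst x)) (Rabs (snd x))). lra. Qed.
Lemma Cmod_le_sum (x : C) : Cmod x <= Rabs (fst x) + Rabs (snd x).
Proof.
  destruct x as [a b]. unfold Cmod; simpl.
  pose proof (Rabs_pos a); pose proof (Rabs_pos b).
  assert (Ea : Rabs a * Rabs a = a * a) by (rewrite <- Rabs_mult; apply Rabs_pos_eq; nra).
  assert (Eb : Rabs b * Rabs b = b * b) by (rewrite <- Rabs_mult; apply Rabs_pos_eq; nra).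
  rewrite <- (sqrt_Rsqr (Rabs a + Rabs b)) by lra.
  apply sqrt_le_1_alt. unfold Rsqr. nra.
Qed.

Lemma hol_eps f z l : hd f z l -> forall eps, 0 < eps -> exists del, 0 < del /\
  forall h, Cmod h < del -> Cmod (f (z + h) - f z - l * h)%C <= eps * Cmod h.
Proof.
  intros [_ H] eps Heps.
  specialize (H z (fun P HP => HP) (mkposreal eps Heps)).
  destruct H as [del Hd].
  exists del. split. apply cond_pos.
  intros h Hh.
  specialize (Hd (z + h)%C).
  lapply Hd; clear Hd.
  2:{ change (Cmod (minus (z + h)%C z) < del).
    replace (minus (z + h)%C z) with h. exact Hh.
    unfold minus, plus, opp; simpl. destruct z, h; unfold Cplus, Copp; simpl. f_equal; ring. }
  intro Hd.
  simpl in Hd.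
  replace (f (z + h) - f z - l * h)%C with (minus (minus (f (z + h)%C) (f z)) (scal (minus (z + h)%C z) l)).
  replace (Cmod h) with (norm (minus (z+h)%C z)).
  exact Hd.
  - destruct z as [a b], h as [c d]. change (Cmod (minus ((a,b)+(c,d))%C (a,b)) = Cmod (c,d)).
    f_equal. unfold minus, plus, opp; simpl. unfold Cplus, Copp; simpl. f_equal; ring.
  - generalize (f (z + h)%C) (f z). intros [a1 a2] [b1 b2]. destruct z, h, l.
    unfold minus, plus, opp, scal, mult; simpl. unfold Cminus, Cplus, Copp, Cmult; simpl. f_equal; ring.
Qed.

Lemma prod_norm_Cmod (x : C) : @norm R_AbsRing C_R_NormedModule x = Cmod x.
Proof.
  destruct x as [a b]. change (sqrt (Rabs a ^ 2 + Rabs b ^ 2) = Cmod (a, b)).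
  unfold Cmod. cbn [fst snd]. rewrite !pow2_abs. reflexivity.
Qed.

Lemma hol_R f z l : hd f z l ->
  @filterdiff R_AbsRing C_R_NormedModule C_R_NormedModule f (locally z) (fun y => Cmult y l).
Proof.
  intros Hf. split.
  - constructor.
    + intros x y. change (Cmult (Cplus x y) l = Cplus (Cmult x l) (Cmult y l)). destruct x, y, l; unfold Cplus, Cmult; simpl; f_equal; ring.
    + intros k x. change (Cmult (k * fst x, k * snd x) l = (k * fst (Cmult x l), k * snd (Cmult x l))).
      destruct x, l; unfold Cmult; simpl; f_equal; ring.
    + exists (Cmod l + 1). split. pose proof (Cmod_ge_0 l); lra.
      intros x. rewrite !prod_norm_Cmod, Cmod_mult. pose proof (Cmod_ge_0 x). pose proof (Cmod_ge_0 l). nra.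
  - intros x Hx. apply (@is_filter_lim_locally_unique R_AbsRing C_R_NormedModule) in Hx. subst x.
    intros eps. destruct (hol_eps f z l Hf eps (cond_pos eps)) as [del [Hdel H]].
    exists (mkposreal (del/2) ltac:(lra)). intros y [H1 H2].
    change (Rabs (fst y - fst z) < del/2) in H1.
    change (Rabs (snd y - snd z) < del/2) in H2.
    set (h := (fst y - fst z, snd y - snd z)).
    assert (Ey : y = (z + h)%C) by (destruct y, z; unfold h, Cplus; simpl; f_equal; ring).
    assert (Hh : Cmod h < del) by (pose proof (Cmod_le_sum h); unfold h in *; simpl in *; lra).
    specialize (H h Hh). rewrite !prod_norm_Cmod.
    match goal with |- Cmod ?A <= _ * Cmod ?B =>
      replace A with (f (z + h) - f z - l * h)%C;
      [replace B with h by (unfold h; destruct y, z; reflexivity) |] end.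
    exact H.
    rewrite <- Ey. unfold h. generalize (f y) (f z); intros [a1 a2] [b1 b2]. destruct y, z, l.
    cunf. f_equal; ring.
Qed.

Lemma rd_chain f g t l v : hd f (g t) l -> rd g t v -> rd (fun s => f (g s)) t (v * l)%C.
Proof.
  intros Hf Hg. unfold rd, is_derive.
  eapply filterdiff_ext_lin.
  apply (filterdiff_comp' g f t). exact Hg. apply hol_R. exact Hf.
  intros y. simpl. destruct v, l. cunf. f_equal; ring.
Qed.

Lemma rd_fst g t v : rd g t v -> is_derive (fun s => fst (g s)) t (fst v).
Proof.
  intros Hg. unfold is_derive.
  eapply filterdiff_ext_lin.
  apply (filterdiff_comp' g (@fst R R) t). exact Hg.
  apply filterdiff_linear. apply (@is_linear_fst R_AbsRing R_NormedModule R_NormedModule).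
  intros y. reflexivity.
Qed.

Lemma rd_snd g t v : rd g t v -> is_derive (fun s => snd (g s)) t (snd v).
Proof.
  intros Hg. unfold is_derive.
  eapply filterdiff_ext_lin.
  apply (filterdiff_comp' g (@snd R R) t). exact Hg.
  apply filterdiff_linear. apply (@is_linear_snd R_AbsRing R_NormedModule R_NormedModule).
  intros y. reflexivity.
Qed.

Lemma rd_pair a b t a' b' : is_derive a t a' -> is_derive b t b' ->
  rd (fun s => (a s, b s)) t (a', b').
Proof.
  intros Ha Hb. unfold rd.
  assert (H := @is_derive_plus R_AbsRing C_R_NormedModule
    (fun s => scal (a s) ((1,0) : C)) (fun s => scal (b s) ((0,1) : C)) t _ _
    (@is_derive_scal_l R_AbsRing C_R_NormedModule a t a' (1,0) Ha)
    (@is_derive_scal_l R_AbsRing C_R_NormedModule b t b' (0,1) Hb)).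
  replace ((a', b') : C) with (plus (scal a' ((1,0):C)) (scal b' ((0,1):C)) : C_R_NormedModule).
  eapply is_derive_ext; [| exact H].
  intros s. simpl. cunf. f_equal; ring.
  cunf. f_equal; ring.
Qed.

Lemma rd_plus f g t u v : rd f t u -> rd g t v -> rd (fun s => f s + g s)%C t (u + v)%C.
Proof. intros Hf Hg. apply (@is_derive_plus R_AbsRing C_R_NormedModule f g t u v Hf Hg). Qed.

Lemma rd_const (c : C) t : rd (fun _ => c) t 0%C.
Proof. apply (@is_derive_const R_AbsRing C_R_NormedModule c t). Qed.

Lemma rd_ext f g t v : (forall s, f s = g s) -> rd f t v -> rd g t v.
Proof. intros E H. eapply is_derive_ext; eauto. Qed.

Lemma rd_val f t u v : u = v -> rd f t u -> rd f t v.
Proof. intros ->; auto. Qed.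

Lemma rd_mult f g t u v : rd f t u -> rd g t v -> rd (fun s => f s * g s)%C t (u * g t + f t * v)%C.
Proof.
  intros Hf Hg.
  pose proof (rd_fst _ _ _ Hf) as F1. pose proof (rd_snd _ _ _ Hf) as F2.
  pose proof (rd_fst _ _ _ Hg) as G1. pose proof (rd_snd _ _ _ Hg) as G2.
  pose proof (Derive.is_derive_mult _ _ _ _ _ F1 G1) as P11.
  pose proof (Derive.is_derive_mult _ _ _ _ _ F2 G2) as P22.
  pose proof (Derive.is_derive_mult _ _ _ _ _ F1 G2) as P12.
  pose proof (Derive.is_derive_mult _ _ _ _ _ F2 G1) as P21.
  pose proof (is_derive_minus _ _ _ _ _ P11 P22) as Q1.
  pose proof (is_derive_plus _ _ _ _ _ P12 P21) as Q2.
  pose proof (rd_pair _ _ _ _ _ Q1 Q2) as H.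
  eapply rd_val; [| eapply rd_ext; [| exact H]].
  - cunf. f_equal; ring.
  - intros s. cunf. f_equal; ring.
Qed.

Definition Ci : C := (0, 1).
Definition E (t : R) : C := (cos t, sin t).

Lemma rd_E t : rd E t (Ci * E t)%C.
Proof.
  eapply rd_val; [| apply rd_pair; [apply (is_derive_cos t) | apply (is_derive_sin t)]].
  unfold Ci, E. cunf. f_equal; ring.
Qed.

Lemma rd_RtoC f t l : is_derive f t l -> rd (fun s => RtoC (f s)) t (RtoC l).
Proof. intros H. apply rd_pair; auto. apply (@is_derive_const R_AbsRing R_NormedModule 0 t). Qed.

Lemma rd_id t : rd (fun s => RtoC s) t 1%C.
Proof. apply rd_RtoC. apply (@is_derive_id R_AbsRing). Qed.

Lemma hd_plus f g z a b : hd f z a -> hd g z b -> hd (fun w => f w + g w)%C z (a + b)%C.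
Proof. intros Hf Hg. apply (@is_derive_plus C_AbsRing C_NormedModule f g z a b Hf Hg). Qed.

Lemma hd_to f z a : hd f z a -> @is_derive C_AbsRing (AbsRing_NormedModule C_AbsRing) f z a.
Proof. intros [H1 H2]. split. apply is_linear_scal_l. intros x Hx eps. specialize (H2 x Hx eps). exact H2. Qed.
Lemma hd_of f z a : @is_derive C_AbsRing (AbsRing_NormedModule C_AbsRing) f z a -> hd f z a.
Proof. intros [H1 H2]. split. apply is_linear_scal_l. intros x Hx eps. specialize (H2 x Hx eps). exact H2. Qed.

Lemma hd_mult f g z a b : hd f z a -> hd g z b -> hd (fun w => f w * g w)%C z (a * g z + f z * b)%C.
Proof. intros Hf Hg. apply hd_of. apply (@is_derive_mult C_AbsRing f g z a b (hd_to _ _ _ Hf) (hd_to _ _ _ Hg)). intros; apply Cmult_comm. Qed.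

Lemma hd_const (c : C) z : hd (fun _ => c) z 0%C.
Proof. apply (@is_derive_const C_AbsRing C_NormedModule c z). Qed.

Lemma hd_id z : hd (fun w => w) z 1%C.
Proof. apply hd_of. apply (@is_derive_id C_AbsRing). Qed.

Lemma hd_ext f g z a b : (forall w, f w = g w) -> a = b -> hd f z a -> hd g z b.
Proof. intros E1 -> H. eapply is_derive_ext; eauto. Qed.

Lemma hd_comp f g z a b : hd g z b -> hd f (g z) a -> hd (fun w => f (g w)) z (b * a)%C.
Proof. intros Hg Hf. eapply hd_ext; [ intros; reflexivity | | apply (@is_derive_comp C_AbsRing C_NormedModule f g z a b Hf (hd_to _ _ _ Hg))]. simpl. cunf. f_equal; ring. Qed.



Lemma eps_hol f z l : (forall eps, 0 < eps -> exists del, 0 < del /\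
  forall h, Cmod h < del -> Cmod (f (z + h) - f z - l * h)%C <= eps * Cmod h) -> hd f z l.
Proof.
  intros H. apply hd_of. split. apply is_linear_scal_l.
  intros x Hx. apply (@is_filter_lim_locally_unique C_AbsRing (AbsRing_NormedModule C_AbsRing)) in Hx. subst x.
  intros eps. destruct (H eps (cond_pos eps)) as [del [Hdel Hd]].
  exists (mkposreal del Hdel). intros y Hy.
  change (Cmod (minus y z) < del) in Hy.
  set (h := minus y z) in *.
  assert (Ey : y = (z + h)%C) by (unfold h; destruct y, z; cunf; f_equal; ring).
  specialize (Hd h Hy).
  change (Cmod (minus (minus (f y) (f z)) (mult h l)) <= eps * Cmod h).
  rewrite Ey. replace (minus (minus (f (z + h)%C) (f z)) (mult h l)) with (f (z + h) - f z - l * h)%C. exact Hd.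
  generalize (f (z+h)%C) (f z). intros [a1 a2] [b1 b2]. destruct h, l. cunf. f_equal; ring.
Qed.

Lemma Cmod_pos (z : C) : z <> 0%C -> 0 < Cmod z.
Proof. intros H. pose proof (Cmod_ge_0 z). destruct (Req_dec (Cmod z) 0) as [E|E]. apply Cmod_eq_0 in E. contradiction. lra. Qed.

Lemma Cmod_tri_low (a b : C) : Cmod a - Cmod b <= Cmod (a + b)%C.
Proof. pose proof (Cmod_triangle (a+b) (-b)) as H. replace ((a+b) + -b)%C with a in H by ring. rewrite Cmod_opp in H. lra. Qed.

Lemma hd_inv (z : C) : z <> 0%C -> hd (fun w => / w)%C z (- / (z * z))%C.
Proof.
  intros Hz. apply eps_hol. intros eps Heps.
  pose proof (Cmod_pos z Hz) as Mz.
  set (m := Cmod z) in *.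
  exists (Rmin (m/2) (eps * (m*m*m) / 2)). split.
  { apply Rmin_glb_lt; [lra|]. assert (0 < m*m*m) by (repeat apply Rmult_lt_0_compat; lra). unfold Rdiv. apply Rmult_lt_0_compat; [nra | lra]. }
  intros h Hh.
  assert (H1 : Cmod h < m/2) by (eapply Rlt_le_trans; [exact Hh| apply Rmin_l]).
  assert (H2 : Cmod h < eps * (m*m*m)/2) by (eapply Rlt_le_trans; [exact Hh| apply Rmin_r]).
  assert (Hzh : m/2 <= Cmod (z + h)) by (pose proof (Cmod_tri_low z h); unfold m in *; lra).
  assert (Nzh : (z + h)%C <> 0%C) by (intro E; rewrite E, Cmod_0 in Hzh; lra).
  replace (/ (z + h) - / z - - / (z * z) * h)%C with (h * h * / (z * z * (z + h)))%C by (field; auto).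
  rewrite Cmod_mult, Cmod_mult, Cmod_inv, Cmod_mult, Cmod_mult.
  2:{ repeat apply Cmult_neq_0; auto. }
  fold m. pose proof (Cmod_ge_0 h).
  set (k := Cmod (z + h)) in *.
  apply Rmult_le_reg_r with (m * m * k). apply Rmult_lt_0_compat; nra.
  rewrite Rmult_assoc, Rinv_l by (apply Rgt_not_eq; apply Rmult_lt_0_compat; nra).
  assert (A : Cmod h <= eps*(m*m*k)).
  { assert (eps*(m*m*(m/2)) <= eps*(m*m*k)) by (apply Rmult_le_compat_l; [lra| apply Rmult_le_compat_l; [nra|lra]]). lra. }
  rewrite Rmult_1_r. replace (eps * Cmod h * (m*m*k)) with (Cmod h * (eps*(m*m*k))) by ring.
  apply Rmult_le_compat_l; lra.
Qed.

Definition ccomp (F : C -> C) (w : C) :=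
  @continuous C_UniformSpace R_UniformSpace (fun x => fst (F x)) w /\
  @continuous C_UniformSpace R_UniformSpace (fun x => snd (F x)) w.

Lemma ball_C_Cmod (w x : C) (r : R) : @ball C_UniformSpace w r x -> Cmod (x - w)%C < 2 * r.
Proof.
  intros [B1 B2]. change (Rabs (fst x - fst w) < r) in B1. change (Rabs (snd x - snd w) < r) in B2.
  pose proof (Cmod_le_sum (x - w)%C) as H.
  replace (fst (x - w)%C) with (fst x - fst w) in H by (destruct x, w; simpl; ring).
  replace (snd (x - w)%C) with (snd x - snd w) in H by (destruct x, w; simpl; ring). lra.
Qed.

Lemma hd_cont_gen f w l :
  hd f w l -> forall eps, 0 < eps -> exists r, 0 < r /\ forall x : C, @ball C_UniformSpace w r x -> Cmod (f x - f w)%C < eps.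
Proof.
  intros Hf eps Heps.
  destruct (hol_eps f w l Hf 1 Rlt_0_1) as [del [Hdel H]].
  pose proof (Cmod_ge_0 l).
  exists (Rmin (del/2) (eps / (Cmod l + 1) / 2)). split.
  { apply Rmin_glb_lt; [lra|]. unfold Rdiv. apply Rmult_lt_0_compat; [|lra]. apply Rmult_lt_0_compat; [lra|]. apply Rinv_0_lt_compat; lra. }
  intros x Hx. apply ball_C_Cmod in Hx.
  set (h := (x - w)%C) in *.
  assert (Ex : x = (w + h)%C) by (unfold h; ring).
  assert (Hh1 : Cmod h < del) by (pose proof (Rmin_l (del/2) (eps / (Cmod l + 1) / 2)); lra).
  assert (Hh2 : Cmod h * (Cmod l + 1) < eps).
  { pose proof (Rmin_r (del/2) (eps / (Cmod l + 1) / 2)).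
    assert (Cmod h < eps / (Cmod l + 1)) by lra.
    apply (Rmult_lt_compat_r (Cmod l + 1)) in H2; [|lra].
    unfold Rdiv in H2. rewrite Rmult_assoc, Rinv_l in H2 by lra. lra. }
  specialize (H h Hh1). rewrite Ex.
  pose proof (Cmod_triangle (f (w + h) - f w - l * h)%C (l * h)%C) as Ht.
  replace (f (w + h) - f w - l * h + l * h)%C with (f (w + h) - f w)%C in Ht by ring.
  rewrite Cmod_mult in Ht. pose proof (Cmod_ge_0 h). nra.
Qed.

Lemma hd_ccomp f w l : hd f w l -> ccomp f w.
Proof.
  intros Hf. split; intros P [e He];
  destruct (hd_cont_gen f w l Hf e (cond_pos e)) as [r [Hr H]];
  exists (mkposreal r Hr); intros x Hx; apply He; specialize (H x Hx).
  - change (Rabs (fst (f x) - fst (f w)) < e). eapply Rle_lt_trans; [| exact H]. replace (fst (f x) - fst (f w)) with (fst (f x - f w)%C) by (simpl; ring). apply Cmod_fst_le.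
  - change (Rabs (snd (f x) - snd (f w)) < e). eapply Rle_lt_trans; [| exact H]. replace (snd (f x) - snd (f w)) with (snd (f x - f w)%C) by (simpl; ring). apply Cmod_snd_le.
Qed.

Definition RR := prod_UniformSpace R_UniformSpace R_UniformSpace.

Definition cc2 (X : R * R -> C) (p : R * R) :=
  @continuous RR R_UniformSpace (fun q => fst (X q)) p /\
  @continuous RR R_UniformSpace (fun q => snd (X q)) p.

Lemma cc2_to_C X p : cc2 X p -> @continuous RR C_UniformSpace X p.
Proof.
  intros [H1 H2].
  eapply (continuous_ext (fun q => (fst (X q), snd (X q)))).
  { intros q. destruct (X q); reflexivity. }
  apply (continuous_comp_2 (U := RR) (V := R_UniformSpace) (W := R_UniformSpace) (X := C_UniformSpace)
     (fun q => fst (X q)) (fun q => snd (X q)) (fun a b => (a, b))); auto.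
  apply (continuous_ext (fun q => q)). intros [a b]; reflexivity.
  intros P HP. exact HP.
Qed.

Lemma cc2_comp F X p : ccomp F (X p) -> cc2 X p -> cc2 (fun q => F (X q)) p.
Proof.
  intros [F1 F2] HX. apply cc2_to_C in HX. split.
  - apply (continuous_comp (U := RR) (V := C_UniformSpace) (W := R_UniformSpace) X (fun w => fst (F w))); auto.
  - apply (continuous_comp (U := RR) (V := C_UniformSpace) (W := R_UniformSpace) X (fun w => snd (F w))); auto.
Qed.

Lemma cont_plus (f g : RR -> R) p : @continuous RR R_UniformSpace f p -> @continuous RR R_UniformSpace g p ->
  @continuous RR R_UniformSpace (fun q => f q + g q) p.
Proof. intros Hf Hg. apply (@continuous_plus RR R_AbsRing R_NormedModule f g p Hf Hg). Qed.

Lemma cont_minus (f g : RR -> R) p : @continuous RR R_UniformSpace f p -> @continuous RR R_UniformSpace g p ->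
  @continuous RR R_UniformSpace (fun q => f q - g q) p.
Proof. intros Hf Hg. apply (@continuous_minus RR R_AbsRing R_NormedModule f g p Hf Hg). Qed.

Lemma cont_mult (f g : RR -> R) p : @continuous RR R_UniformSpace f p -> @continuous RR R_UniformSpace g p ->
  @continuous RR R_UniformSpace (fun q => f q * g q) p.
Proof. intros Hf Hg. apply (@continuous_mult RR R_AbsRing f g p Hf Hg). Qed.

Lemma cont_const (c : R) p : @continuous RR R_UniformSpace (fun _ => c) p.
Proof. apply continuous_const. Qed.

Lemma cont_fst p : @continuous RR R_UniformSpace (fun q => fst q) p.
Proof. destruct p. apply continuous_fst. Qed.
Lemma cont_snd p : @continuous RR R_UniformSpace (fun q => snd q) p.
Proof. destruct p. apply continuous_snd. Qed.

Lemma cont_compR (f : R -> R) (g : RR -> R) p : @continuous RR R_UniformSpace g p -> ex_derive f (g p) ->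
  @continuous RR R_UniformSpace (fun q => f (g q)) p.
Proof. intros Hg Hf. apply (continuous_comp g f); auto. apply (@ex_derive_continuous R_AbsRing R_NormedModule f (g p)). auto. Qed.

Lemma cc2_plus X Y p : cc2 X p -> cc2 Y p -> cc2 (fun q => X q + Y q)%C p.
Proof. intros [X1 X2] [Y1 Y2]. split; simpl; apply cont_plus; auto. Qed.

Lemma cc2_mult X Y p : cc2 X p -> cc2 Y p -> cc2 (fun q => X q * Y q)%C p.
Proof. intros [X1 X2] [Y1 Y2]. split; simpl.
  apply cont_minus; apply cont_mult; auto.
  apply cont_plus; apply cont_mult; auto. Qed.

Lemma cc2_RtoC (g : RR -> R) p : @continuous RR R_UniformSpace g p -> cc2 (fun q => RtoC (g q)) p.
Proof. intros H. split; simpl. exact H. apply cont_const. Qed.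

Lemma cc2_const (c : C) p : cc2 (fun _ => c) p.
Proof. split; apply cont_const. Qed.

Lemma cc2_E p : cc2 (fun q => E (snd q)) p.
Proof. split; simpl; apply cont_compR; try apply cont_snd; auto_derive; auto. Qed.

Lemma cc2_fst p : cc2 (fun q => RtoC (fst q)) p.
Proof. split; simpl. apply cont_fst. apply cont_const. Qed.

Lemma cc2_snd p : cc2 (fun q => RtoC (snd q)) p.
Proof. split; simpl. apply cont_snd. apply cont_const. Qed.

Lemma cont2_restr (g : R -> R -> R) x y : continuity_2d_pt g x y -> continuous (fun v => g x v) y.
Proof.
  intros H. apply continuity_2d_pt_filterlim in H.
  intros P HP. specialize (H P HP). destruct H as [e He].
  exists e. intros v Hv. apply (He (x, v)). split; simpl; auto. apply ball_center.
Qed.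

Lemma cont2_ext (D F : R -> R -> R) a b x y : a < x < b -> (forall u v, a < u < b -> F u v = D u v) ->
  continuity_2d_pt D x y -> continuity_2d_pt F x y.
Proof.
  intros Hx HE H eps. destruct (H eps) as [del Hd].
  assert (P : 0 < Rmin del (Rmin (x - a) (b - x))) by (apply Rmin_glb_lt; [apply cond_pos| apply Rmin_glb_lt; lra]).
  exists (mkposreal _ P). simpl. intros u v Hu Hv.
  pose proof (Rmin_l del (Rmin (x - a) (b - x))). pose proof (Rmin_r del (Rmin (x - a) (b - x))).
  pose proof (Rmin_l (x - a) (b - x)). pose proof (Rmin_r (x - a) (b - x)).
  apply Rabs_def2 in Hu as Hu'.
  rewrite !HE by lra. apply Hd; lra.
Qed.

Lemma is_derive_val (f : R -> R) x l1 l2 : l1 = l2 -> is_derive f x l1 -> is_derive f x l2.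
Proof. intros ->; auto. Qed.

Definition gam (c0 c1 : C) (s0 s1 : R) (u t : R) : C := (c0 + RtoC u * c1 + RtoC (s0 + u * s1) * E t)%C.
Definition phi G c0 c1 s0 s1 u t := (G (gam c0 c1 s0 s1 u t) * (RtoC (s0 + u * s1) * E t))%C.
Definition Iint G c0 c1 s0 s1 u := RInt (fun t => fst (phi G c0 c1 s0 s1 u t)) 0 (2*PI).

Lemma locally_int (a b u : R) (P : R -> Prop) : a < u < b -> (forall y, a < y < b -> P y) -> locally u P.
Proof.
  intros Hu H. exists (mkposreal (Rmin (u - a) (b - u)) ltac:(apply Rmin_glb_lt; lra)).
  intros y Hy. change (Rabs (y - u) < Rmin (u - a) (b - u)) in Hy.
  pose proof (Rmin_l (u - a) (b - u)). pose proof (Rmin_r (u - a) (b - u)).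
  apply H. apply Rabs_def2 in Hy. lra.
Qed.

Lemma rd_gam_u c0 c1 s0 s1 u t : rd (fun u' => gam c0 c1 s0 s1 u' t) u (c1 + RtoC s1 * E t)%C.
Proof.
  unfold gam.
  eapply rd_val; [| apply rd_plus; [apply rd_plus; [apply rd_const | apply rd_mult; [apply rd_id | apply rd_const]] |
     apply rd_mult; [apply rd_RtoC | apply rd_const]]].
  2:{ apply (is_derive_plus (fun _ => s0) (fun u => u * s1)). apply (@is_derive_const R_AbsRing R_NormedModule).
      apply (Derive.is_derive_mult (fun u => u) (fun _ => s1)). apply (@is_derive_id R_AbsRing). apply (@is_derive_const R_AbsRing R_NormedModule). }
  cunf. f_equal; ring.
Qed.

Lemma is_derive_affine (s0 s1 u : R) : is_derive (fun u => s0 + u * s1) u s1.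
Proof. auto_derive; auto; ring. Qed.

Lemma rd_gam_t c0 c1 s0 s1 u t : rd (fun v => gam c0 c1 s0 s1 u v) t (RtoC (s0 + u * s1) * (Ci * E t))%C.
Proof.
  unfold gam.
  eapply rd_val; [| apply rd_plus; [apply rd_const | apply rd_mult; [apply rd_const | apply rd_E]]].
  cunf. f_equal; ring.
Qed.

Section HLsec.
Variables (G G' : C -> C) (c0 c1 : C) (s0 s1 a b : R).
Hypothesis Hgood : forall u, a < u < b -> forall t,
  hd G (gam c0 c1 s0 s1 u t) (G' (gam c0 c1 s0 s1 u t)) /\ ccomp G' (gam c0 c1 s0 s1 u t).

Let gm := gam c0 c1 s0 s1.
Let D u t := fst (G' (gm u t) * ((c1 + RtoC s1 * E t) * (RtoC (s0 + u*s1) * E t)) + G (gm u t) * (RtoC s1 * E t))%C.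
Let Psi u t := snd (G (gm u t) * (c1 + RtoC s1 * E t))%C.
Let f u t := fst (phi G c0 c1 s0 s1 u t).

Lemma HL_du u t : a < u < b -> is_derive (fun u' => f u' t) u (D u t).
Proof.
  intros Hu. destruct (Hgood u Hu t) as [Hd _].
  pose proof (rd_chain G (fun u' => gm u' t) u _ _ Hd (rd_gam_u c0 c1 s0 s1 u t)) as H1.
  assert (H2 : rd (fun u' => RtoC (s0 + u' * s1) * E t)%C u (RtoC s1 * E t)%C).
  { eapply rd_val; [| apply rd_mult; [apply rd_RtoC; apply is_derive_affine | apply rd_const]]. cunf. f_equal; ring. }
  pose proof (rd_fst _ _ _ (rd_mult _ _ _ _ _ H1 H2)) as H3.
  unfold f, phi. eapply is_derive_val; [| eapply is_derive_ext; [| exact H3]].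
  - unfold D, gm. f_equal. ring.
  - intros; reflexivity.
Qed.

Lemma HL_dt u t : a < u < b -> is_derive (fun v => Psi u v) t (D u t).
Proof.
  intros Hu. destruct (Hgood u Hu t) as [Hd _].
  pose proof (rd_chain G (fun v => gm u v) t _ _ Hd (rd_gam_t c0 c1 s0 s1 u t)) as H1.
  assert (H2 : rd (fun v => c1 + RtoC s1 * E v)%C t (RtoC s1 * (Ci * E t))%C).
  { eapply rd_val; [| apply rd_plus; [apply rd_const| apply rd_mult; [apply rd_const | apply rd_E]]]. cunf. f_equal; ring. }
  pose proof (rd_snd _ _ _ (rd_mult _ _ _ _ _ H1 H2)) as H3.
  unfold Psi. eapply is_derive_val; [| eapply is_derive_ext; [| exact H3]].
  - unfold D, gm. generalize (G' (gam c0 c1 s0 s1 u t)) (G (gam c0 c1 s0 s1 u t)). intros g1 g0.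
    unfold Ci, E. cunf. ring.
  - intros; reflexivity.
Qed.
Lemma cc2_gm p : cc2 (fun q => gm (fst q) (snd q)) p.
Proof.
  unfold gm, gam. apply cc2_plus; [apply cc2_plus|apply cc2_mult].
  apply cc2_const. apply cc2_mult. apply cc2_fst. apply cc2_const.
  apply cc2_RtoC. apply cont_plus. apply cont_const. apply cont_mult. apply cont_fst. apply cont_const.
  apply cc2_E.
Qed.

Lemma HL_cont u t : a < u < b -> continuity_2d_pt D u t.
Proof.
  intros Hu. apply continuity_2d_pt_filterlim.
  destruct (Hgood u Hu t) as [Hd Hc].
  assert (C1 : cc2 (fun q => G' (gm (fst q) (snd q))) (u, t)) by (apply cc2_comp; [exact Hc | apply cc2_gm]).
  assert (C2 : cc2 (fun q => G (gm (fst q) (snd q))) (u, t)) by (apply cc2_comp; [eapply hd_ccomp; exact Hd | apply cc2_gm]).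
  assert (C3 : cc2 (fun q => G' (gm (fst q) (snd q)) * ((c1 + RtoC s1 * E (snd q)) * (RtoC (s0 + fst q * s1) * E (snd q)))
     + G (gm (fst q) (snd q)) * (RtoC s1 * E (snd q)))%C (u, t)).
  { apply cc2_plus; apply cc2_mult; auto.
    apply cc2_mult. apply cc2_plus. apply cc2_const. apply cc2_mult. apply cc2_const. apply cc2_E.
    apply cc2_mult. apply cc2_RtoC. apply cont_plus. apply cont_const. apply cont_mult. apply cont_fst. apply cont_const. apply cc2_E.
    apply cc2_mult. apply cc2_const. apply cc2_E. }
  destruct C3 as [C3 _]. exact C3.
Qed.
Lemma HL_int u : a < u < b -> RInt (fun t => D u t) 0 (2*PI) = 0.
Proof.
  intros Hu.
  assert (H : is_RInt (fun t => D u t) 0 (2*PI) (minus (Psi u (2*PI)) (Psi u 0))).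
  { apply (is_RInt_derive (V := R_CompleteNormedModule) (fun t => Psi u t) (fun t => D u t)).
    - intros x _. apply HL_dt; auto.
    - intros x _. apply cont2_restr. apply HL_cont; auto. }
  apply (is_RInt_unique (V := R_CompleteNormedModule)) in H. rewrite H.
  unfold Psi, gm, gam, E. rewrite cos_2PI, sin_2PI, cos_0, sin_0. unfold minus, plus, opp; simpl. ring.
Qed.

Lemma HL_f_cont u t : a < u < b -> continuous (fun v => f u v) t.
Proof.
  intros Hu. destruct (Hgood u Hu t) as [Hd _].
  pose proof (rd_chain G (fun v => gm u v) t _ _ Hd (rd_gam_t c0 c1 s0 s1 u t)) as H1.
  assert (H2 : rd (fun v => RtoC (s0 + u * s1) * E v)%C t (0 * E t + RtoC (s0 + u * s1) * (Ci * E t))%C).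
  { apply (rd_mult (fun _ => RtoC (s0 + u * s1)) E); [apply rd_const | apply rd_E]. }
  pose proof (rd_fst _ _ _ (rd_mult _ _ _ _ _ H1 H2)) as H3.
  apply (@ex_derive_continuous R_AbsRing R_NormedModule). eexists. unfold f, phi. exact H3.
Qed.

Lemma HL_deriv u : a < u < b -> is_derive (Iint G c0 c1 s0 s1) u (RInt (fun t => D u t) 0 (2*PI)).
Proof.
  intros Hu. unfold Iint.
  assert (E1 : RInt (fun t => D u t) 0 (2*PI) = RInt (fun t => Derive (fun u' => f u' t) u) 0 (2*PI)).
  { apply RInt_ext. intros t _. symmetry. apply is_derive_unique. apply HL_du; auto. }
  rewrite E1.
  apply (is_derive_RInt_param f 0 (2*PI) u).
  - apply (locally_int a b); auto. intros y Hy t _. eexists. apply HL_du; auto.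
  - intros t _. apply (cont2_ext D _ a b); auto.
    + intros x y Hx. apply is_derive_unique. apply HL_du; auto.
    + apply HL_cont; auto.
  - apply (locally_int a b); auto. intros y Hy. apply (ex_RInt_continuous (V := R_CompleteNormedModule)). intros z _. apply HL_f_cont; auto.
Qed.

Theorem HL u1 u2 : a < u1 -> u1 <= u2 -> u2 < b -> Iint G c0 c1 s0 s1 u1 = Iint G c0 c1 s0 s1 u2.
Proof.
  intros H1 H2 H3.
  destruct (MVT_gen (Iint G c0 c1 s0 s1) u1 u2 (fun u => RInt (fun t => D u t) 0 (2*PI))) as [c [Hc Ec]].
  - intros x Hx. rewrite Rmin_left, Rmax_right in Hx by lra. apply HL_deriv. lra.
  - intros x Hx. rewrite Rmin_left, Rmax_right in Hx by lra. apply continuity_pt_filterlim.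
    apply (@ex_derive_continuous R_AbsRing R_NormedModule). eexists. apply HL_deriv. lra.
  - rewrite Rmin_left, Rmax_right in Hc by lra. rewrite HL_int in Ec by lra. lra.
Qed.
End HLsec.

Definition q1 (z0 w : C) : C := (/ (w - z0))%C.

Lemma Cminus_neq (w z0 : C) : w <> z0 -> (w - z0)%C <> 0%C.
Proof. intros H E. apply H. replace w with ((w - z0) + z0)%C by ring. rewrite E. ring. Qed.

Lemma hd_q1 z0 w : w <> z0 -> hd (q1 z0) w (- (q1 z0 w * q1 z0 w))%C.
Proof.
  intros H. unfold q1.
  eapply hd_ext; [intros; reflexivity | |].
  2:{ apply (hd_comp (fun x => / x)%C (fun x => x - z0)%C w (- / ((w - z0) * (w - z0)))%C 1%C).
      - eapply hd_ext; [intros; reflexivity | | apply hd_plus; [apply hd_id | apply hd_const]]. ring.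
      - apply hd_inv. apply Cminus_neq; auto. }
  field. apply Cminus_neq; auto.
Qed.

Lemma Cmod_E t : Cmod (E t) = 1.
Proof. unfold Cmod, E; simpl. rewrite Rmult_1_r, Rmult_1_r. pose proof (sin2_cos2 t) as H. unfold Rsqr in H. rewrite Rplus_comm, H. apply sqrt_1. Qed.

Lemma Cinv_E t : (/ E t)%C = (cos t, - sin t).
Proof.
  unfold E, Cinv; simpl. pose proof (sin2_cos2 t) as H. unfold Rsqr in H.
  replace (cos t * (cos t * 1) + sin t * (sin t * 1)) with 1 by lra. f_equal; field.
Qed.

Lemma RInt_trig c al be : RInt (fun t => c + al * cos t + be * sin t) 0 (2*PI) = 2*PI*c.
Proof.
  set (F := fun t => c * t + al * sin t - be * cos t).
  assert (H : is_RInt (fun t => c + al * cos t + be * sin t) 0 (2*PI) (minus (F (2*PI)) (F 0))).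
  { apply (is_RInt_derive (V := R_CompleteNormedModule) F).
    - intros x _. unfold F. auto_derive; auto. ring.
    - intros x _. apply (@ex_derive_continuous R_AbsRing R_NormedModule). auto_derive. auto. }
  apply (is_RInt_unique (V := R_CompleteNormedModule)) in H. rewrite H. unfold F.
  rewrite cos_2PI, sin_2PI, cos_0, sin_0. unfold minus, plus, opp; simpl. ring.
Qed.

Lemma circ_cont F F' c s : (forall t, hd F (c + RtoC s * E t)%C (F' (c + RtoC s * E t)%C)) ->
  forall t0, continuous (fun t => fst (F (c + RtoC s * E t) * (RtoC s * E t))%C) t0.
Proof.
  intros H t0.
  assert (Hp : rd (fun t => c + RtoC s * E t)%C t0 (0 + (0 * E t0 + RtoC s * (Ci * E t0)))%C).
  { apply rd_plus. apply rd_const. apply (rd_mult (fun _ => RtoC s) E). apply rd_const. apply rd_E. }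
  pose proof (rd_chain F (fun t => c + RtoC s * E t)%C t0 _ _ (H t0) Hp) as H1.
  assert (H2 : rd (fun t => RtoC s * E t)%C t0 (0 * E t0 + RtoC s * (Ci * E t0))%C).
  { apply (rd_mult (fun _ => RtoC s) E). apply rd_const. apply rd_E. }
  pose proof (rd_fst _ _ _ (rd_mult _ _ _ _ _ H1 H2)) as H3.
  apply (@ex_derive_continuous R_AbsRing R_NormedModule). eexists. exact H3.
Qed.

Lemma RI_minus (f g : R -> R) a b : ex_RInt f a b -> ex_RInt g a b ->
  RInt (fun x => f x - g x) a b = RInt f a b - RInt g a b.
Proof. intros Hf Hg. apply (RInt_minus (V := R_CompleteNormedModule)); auto. Qed.

Lemma exRI_cont (f : R -> R) a b : (forall t, continuous f t) -> ex_RInt f a b.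
Proof. intros H. apply (ex_RInt_continuous (V := R_CompleteNormedModule)). intros; auto. Qed.

Lemma sq0 a b : a*a + b*b = 0 -> a = 0 /\ b = 0.
Proof. intros H. apply Rplus_sqr_eq_0. unfold Rsqr. exact H. Qed.
Lemma herg_id (x y p q U V : R) :
  ((p, q) : C) <> 0%C -> (((x,y):C) - (p,q))%C <> 0%C -> (((x,y):C) - (RtoC (x*x+y*y) * / Cconj (p,q)))%C <> 0%C ->
  fst ((U,V) * q1 (p,q) (x,y) * (x,y))%C - fst ((U,V) * q1 (RtoC (x*x+y*y) * / Cconj (p,q)) (x,y) * (x,y))%C
   = U * ((x*x+y*y) - (p*p+q*q)) / ((x-p)*(x-p)+(y-q)*(y-q)).
Proof.
  intros Hz H1 H2.
  assert (D1 : (x-p)*(x-p)+(y-q)*(y-q) <> 0).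
  { intro E. apply H1. apply sq0 in E. destruct E.
    apply injective_projections; simpl; lra. }
  assert (D0 : p*p+q*q <> 0).
  { intro E. apply Hz. apply sq0 in E. destruct E. subst. reflexivity. }
  unfold q1, Cconj in *. 
  unfold Cinv, Cminus, Cplus, Copp, Cmult, RtoC in *; simpl in *.
  assert (D0' : p * p + - q * - q <> 0) by (replace (p * p + - q * - q) with (p*p+q*q) by ring; auto).
  field. split; [auto|split; [auto|]].
  intro E. apply sq0 in E. destruct E as [A1 A2]. apply H2. apply injective_projections; simpl.
  - replace (x + - ((x * x + y * y) * (p / (p * (p * 1) + - q * (- q * 1))) - 0 * (- - q / (p * (p * 1) + - q * (- q * 1)))))
      with ((x * (p * p + - q * - q) + - ((x * x + y * y) * p)) / (p * p + - q * - q)) by (field; auto).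
    rewrite A1. unfold Rdiv. ring.
  - replace (y + - ((x * x + y * y) * (- - q / (p * (p * 1) + - q * (- q * 1))) + 0 * (p / (p * (p * 1) + - q * (- q * 1)))))
      with ((y * (p * p + - q * - q) + - ((x * x + y * y) * - - q)) / (p * p + - q * - q)) by (field; auto).
    rewrite A2. unfold Rdiv. ring.
Qed.

Lemma circ_cont0 F F' s : (forall t, hd F (RtoC s * E t)%C (F' (RtoC s * E t)%C)) ->
  forall t0, continuous (fun t => fst (F (RtoC s * E t) * (RtoC s * E t))%C) t0.
Proof.
  intros H t0. eapply continuous_ext; [| apply (circ_cont F F' 0%C s)].
  - intros t. simpl. rewrite Cplus_0_l. reflexivity.
  - intros t. rewrite Cplus_0_l. apply H.
Qed.

Lemma poisson_lb x y p q rho U : x*x+y*y = rho*rho -> 0 <= U -> sqrt (p*p+q*q) < rho ->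
  0 < (x-p)*(x-p)+(y-q)*(y-q) -> sqrt ((x-p)*(x-p)+(y-q)*(y-q)) <= rho + sqrt (p*p+q*q) ->
  (rho - sqrt (p*p+q*q)) / (rho + sqrt (p*p+q*q)) * U <= U * ((x*x+y*y) - (p*p+q*q)) / ((x-p)*(x-p)+(y-q)*(y-q)).
Proof.
  intros Hw HU Hr HD Hs.
  pose proof (sqrt_pos (p*p+q*q)) as Hr0.
  assert (Er : sqrt (p*p+q*q) * sqrt (p*p+q*q) = p*p+q*q) by (apply sqrt_sqrt; nra).
  assert (ED : sqrt ((x-p)*(x-p)+(y-q)*(y-q)) * sqrt ((x-p)*(x-p)+(y-q)*(y-q)) = (x-p)*(x-p)+(y-q)*(y-q)) by (apply sqrt_sqrt; nra).
  pose proof (sqrt_pos ((x-p)*(x-p)+(y-q)*(y-q))).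
  revert Er ED Hs H Hr Hr0 HD. generalize (sqrt (p*p+q*q)) (sqrt ((x-p)*(x-p)+(y-q)*(y-q))). intros r d Er ED Hs Hd Hr Hr0 HD.
  rewrite Hw, <- Er, <- ED.
  assert (Hdd : d * d <= (rho + r) * (rho + r)) by nra.
  assert (AB : (rho - r) / (rho + r) <= (rho * rho - r * r) / (d * d)).
  { apply (Rmult_le_reg_r ((rho + r) * (d * d))). nra.
    replace ((rho - r) / (rho + r) * ((rho + r) * (d * d))) with ((rho - r) * (d * d)) by (field; lra).
    replace ((rho * rho - r * r) / (d * d) * ((rho + r) * (d * d))) with ((rho * rho - r * r) * (rho + r)) by (field; nra).
    nra. }
  replace (U * (rho * rho - r * r) / (d * d)) with ((rho * rho - r * r) / (d * d) * U) by (unfold Rdiv; ring).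
  apply Rmult_le_compat_r; auto.
Qed.

Lemma Cmod_pair a b : Cmod (a, b) = sqrt (a*a+b*b).
Proof. unfold Cmod; simpl. f_equal; ring. Qed.

Lemma E_pair rho t : (RtoC rho * E t)%C = (rho * cos t, rho * sin t).
Proof. unfold E, RtoC. cunf. f_equal; ring. Qed.

Section Cauchy.
Variables (Tf Rf Rf' : C -> C).
Hypothesis HT : forall w, Cmod w < 1 -> hd Tf w (Rf w) /\ hd Rf w (Rf' w).

Definition GG z0 w := (Tf w * (q1 z0 w * q1 z0 w))%C.
Definition GG' z0 w := (Rf w * (q1 z0 w * q1 z0 w) + Tf w * (- (RtoC 2) * (q1 z0 w * q1 z0 w * q1 z0 w)))%C.

Lemma GG_good z0 w : Cmod w < 1 -> w <> z0 -> hd (GG z0) w (GG' z0 w) /\ ccomp (GG' z0) w.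
Proof.
  intros Hw Hz. destruct (HT w Hw) as [H1 H2]. pose proof (hd_q1 z0 w Hz) as Hq.
  assert (Hq2 := hd_mult _ _ _ _ _ Hq Hq).
  assert (Hq3 := hd_mult _ _ _ _ _ Hq2 Hq).
  split.
  - eapply hd_ext; [intros; reflexivity | | apply (hd_mult _ _ _ _ _ H1 Hq2)]. unfold GG'. ring.
  - eapply hd_ccomp. unfold GG'.
    apply hd_plus. apply (hd_mult _ _ _ _ _ H2 Hq2). apply hd_mult. exact H1.
    apply hd_mult. apply hd_const. exact Hq3.
Qed.


Lemma RInt_0 (g : R -> R) a b : (forall t, g t = 0) -> RInt g a b = 0.
Proof. intros H. rewrite (RInt_ext _ (fun _ => 0)) by auto. rewrite RInt_const. unfold scal; simpl. unfold mult; simpl. ring. Qed.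

Lemma CauchyOut z0 rho : 0 < rho < 1 -> rho < Cmod z0 ->
  RInt (fun t => fst (GG z0 (RtoC rho * E t) * (RtoC rho * E t))%C) 0 (2*PI) = 0.
Proof.
  intros Hr Hz.
  set (m := Rmin (1/rho) (Cmod z0 / rho)).
  assert (Hm1 : rho * m <= 1) by (unfold m; pose proof (Rmin_l (1/rho) (Cmod z0 / rho));
     apply Rmult_le_compat_l with (r := rho) in H; [|lra]; field_simplify in H; lra).
  assert (Hm2 : rho * m <= Cmod z0) by (unfold m; pose proof (Rmin_r (1/rho) (Cmod z0 / rho));
     apply Rmult_le_compat_l with (r := rho) in H; [|lra]; field_simplify in H; lra).
  assert (Hm : 1 < m) by (unfold m; apply Rmin_glb_lt; apply (Rmult_lt_reg_l rho); try lra; field_simplify; lra).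
  pose proof (HL (GG z0) (GG' z0) 0%C 0%C 0 rho (-m) m) as H.
  assert (Hg : forall u, -m < u < m -> forall t, hd (GG z0) (gam 0 0 0 rho u t) (GG' z0 (gam 0 0 0 rho u t)) /\ ccomp (GG' z0) (gam 0 0 0 rho u t)).
  { intros u Hu t. 
    assert (Ew : gam 0 0 0 rho u t = (RtoC (u * rho) * E t)%C) by (unfold gam; rewrite ?RtoC_plus, ?RtoC_mult; ring).
    assert (Cw : Cmod (gam 0 0 0 rho u t) = Rabs u * rho) by (rewrite Ew, Cmod_mult, Cmod_R, Cmod_E, Rabs_mult, (Rabs_pos_eq rho) by lra; ring).
    assert (Hu' : Rabs u * rho < m * rho) by (apply Rmult_lt_compat_r; [lra|]; apply Rabs_def1; lra).
    apply GG_good. rewrite Cw. lra.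
    intro E1. rewrite E1 in Cw. lra. }
  specialize (H Hg 0 1 ltac:(lra) ltac:(lra) ltac:(lra)).
  unfold Iint in H. rewrite RInt_0 in H.
  - transitivity (RInt (fun t => fst (phi (GG z0) 0 0 0 rho 1 t)) 0 (2*PI)); [| symmetry; exact H].
    apply RInt_ext. intros t _. unfold phi.
    replace (gam 0 0 0 rho 1 t) with (RtoC rho * E t)%C by (unfold gam; rewrite ?RtoC_plus, ?RtoC_mult; ring).
    replace (0 + 1 * rho) with rho by ring. reflexivity.
  - intros t. unfold phi. replace (0 + 0 * rho) with 0 by ring. 
    rewrite Cmult_0_l, Cmult_0_r. reflexivity.
Qed.
Lemma geo z0 rho s u t : Cmod z0 < rho < 1 -> 0 < s -> 2 * s <= rho - Cmod z0 -> s <= 1 - rho ->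
  - s / 4 < u < 1 + s / 4 ->
  Cmod (gam z0 (- z0) s (rho - s) u t) < 1 /\ gam z0 (- z0) s (rho - s) u t <> z0.
Proof.
  intros Hr Hs H1 H2 Hu.
  set (S := s + u * (rho - s)).
  assert (Ew : gam z0 (- z0) s (rho - s) u t = (RtoC (1 - u) * z0 + RtoC S * E t)%C)
    by (unfold gam, S; rewrite ?RtoC_plus, ?RtoC_mult, ?RtoC_minus; ring).
  assert (Ed : (gam z0 (- z0) s (rho - s) u t - z0 = RtoC S * E t + RtoC (- u) * z0)%C)
    by (rewrite Ew; rewrite ?RtoC_opp, ?RtoC_minus; ring).
  pose proof (Cmod_ge_0 z0). set (r := Cmod z0) in *.
  assert (SP : 0 < S).
  { unfold S. destruct (Rle_dec 0 u). nra. nra. }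
  assert (SU : S - Rabs u * r > 0).
  { unfold S. destruct (Rle_dec 0 u). rewrite Rabs_pos_eq by lra. nra. rewrite Rabs_left by lra. nra. }
  split.
  - rewrite Ew. eapply Rle_lt_trans; [apply Cmod_triangle|].
    rewrite !Cmod_mult, !Cmod_R, Cmod_E, (Rabs_pos_eq S) by lra. fold r.
    destruct (Rle_dec u 1).
    + rewrite Rabs_pos_eq by lra. unfold S. destruct (Rle_dec 0 u). nra. nra.
    + rewrite Rabs_left by lra. unfold S. nra.
  - intro E1. assert (E2 : (gam z0 (- z0) s (rho - s) u t - z0 = 0)%C) by (rewrite E1; ring).
    rewrite Ed in E2.
    pose proof (Cmod_tri_low (RtoC S * E t) (RtoC (- u) * z0)) as E3.
    rewrite E2, Cmod_0, !Cmod_mult, !Cmod_R, Cmod_E, Rabs_Ropp, (Rabs_pos_eq S) in E3 by lra. fold r in E3. lra.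
Qed.
Lemma small_zero x : (forall eps, 0 < eps -> Rabs x <= 2 * PI * eps) -> x = 0.
Proof.
  intros H. destruct (Req_dec x 0) as [|Hx]; auto. exfalso.
  pose proof PI_RGT_0. assert (Ha : 0 < Rabs x) by (apply Rabs_pos_lt; auto).
  specialize (H (Rabs x / (4 * PI)) ltac:(apply Rdiv_lt_0_compat; lra)).
  replace (2 * PI * (Rabs x / (4 * PI))) with (Rabs x / 2) in H by (field; lra). lra.
Qed.

Lemma CauchyIn z0 rho : Cmod z0 < rho < 1 ->
  RInt (fun t => fst (GG z0 (RtoC rho * E t) * (RtoC rho * E t))%C) 0 (2*PI) = 2 * PI * fst (Rf z0).
Proof.
  intros Hz. pose proof (Cmod_ge_0 z0).
  set (K := RInt (fun t => fst (GG z0 (RtoC rho * E t) * (RtoC rho * E t))%C) 0 (2*PI)).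
  assert (Hsm1 : exists smax, 0 < smax /\ 2 * smax <= rho - Cmod z0 /\ smax <= 1 - rho).
  { exists (Rmin ((rho - Cmod z0)/2) (1 - rho)). split. apply Rmin_glb_lt; lra.
    pose proof (Rmin_l ((rho - Cmod z0)/2) (1 - rho)). pose proof (Rmin_r ((rho - Cmod z0)/2) (1 - rho)). lra. }
  destruct Hsm1 as [smax [Hsmax [Hsm1 Hsm2]]].
  assert (Key : forall s, 0 < s <= smax ->
     K = RInt (fun t => fst (GG z0 (z0 + RtoC s * E t) * (RtoC s * E t))%C) 0 (2*PI)).
  { intros s Hs.
    assert (Hs1 : 2 * s <= rho - Cmod z0) by lra.
    assert (Hs2 : s <= 1 - rho) by lra.
    pose proof (HL (GG z0) (GG' z0) z0 (- z0) s (rho - s) (- s / 4) (1 + s / 4)) as H1.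
    lapply H1.
    2:{ intros u Hu t. destruct (geo z0 rho s u t Hz ltac:(lra) Hs1 Hs2 Hu). apply GG_good; auto. }
    clear H1; intros H1. specialize (H1 0 1 ltac:(lra) ltac:(lra) ltac:(lra)).
    unfold Iint, phi in H1.
    unfold K. transitivity (RInt (fun t => fst (GG z0 (gam z0 (- z0) s (rho - s) 1 t) * (RtoC (s + 1 * (rho - s)) * E t))%C) 0 (2*PI)).
    - apply RInt_ext. intros t _.
      replace (gam z0 (- z0) s (rho - s) 1 t) with (RtoC rho * E t)%C by (unfold gam; rewrite ?RtoC_plus, ?RtoC_mult, ?RtoC_minus; ring).
      replace (s + 1 * (rho - s)) with rho by ring. reflexivity.
    - rewrite <- H1. apply RInt_ext. intros t _.
      replace (gam z0 (- z0) s (rho - s) 0 t) with (z0 + RtoC s * E t)%C by (unfold gam; rewrite ?RtoC_plus, ?RtoC_mult, ?RtoC_minus; ring).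
      replace (s + 0 * (rho - s)) with s by ring. reflexivity. }
  apply Rminus_diag_uniq. apply small_zero. intros eps Heps.
  assert (Hz0 : Cmod z0 < 1) by lra.
  destruct (hol_eps Tf z0 (Rf z0) (proj1 (HT z0 Hz0)) eps Heps) as [del [Hdel Hd]].
  assert (Hs0 : exists s, 0 < s <= smax /\ s < del).
  { exists (Rmin smax (del / 2)). split. split. apply Rmin_glb_lt; lra. apply Rmin_l. pose proof (Rmin_r smax (del/2)); lra. }
  destruct Hs0 as [s [Hs Hsd]].
  rewrite (Key s Hs).
  set (e0 := fun t => fst (GG z0 (z0 + RtoC s * E t) * (RtoC s * E t))%C).
  set (g := fun t => fst (Rf z0) + (fst (Tf z0) / s) * cos t + (snd (Tf z0) / s) * sin t).
  assert (Hsn : forall t, (RtoC s * E t)%C <> 0%C).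
  { intros t E1. assert (Cmod (RtoC s * E t)%C = 0) by (rewrite E1; apply Cmod_0).
    rewrite Cmod_mult, Cmod_R, Cmod_E, Rabs_pos_eq in H0; lra. }
  assert (Pt : forall t, e0 t - g t = fst ((Tf (z0 + RtoC s * E t) - Tf z0 - Rf z0 * (RtoC s * E t)) * / (RtoC s * E t))%C).
  { intros t. unfold e0, g, GG, q1. set (h := (RtoC s * E t)%C).
    replace (z0 + h - z0)%C with h by ring.
    replace (Tf (z0 + h) * (/ h * / h) * h)%C with (Rf z0 + Tf z0 * / h + (Tf (z0 + h) - Tf z0 - Rf z0 * h) * / h)%C
      by (field; apply Hsn).
    assert (Eh : (/ h)%C = (RtoC (/ s) * ((cos t, (- sin t)%R) : C))%C).
    { unfold h. rewrite <- Cinv_E, RtoC_inv by lra. field. split.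
      intro E1. apply (Hsn t). rewrite E1. ring.
      intro E1. apply RtoC_inj in E1. lra. }
    rewrite Eh. clear Eh. cunf. unfold Rdiv. ring. }
  assert (Ce0 : forall t, continuous e0 t).
  { intros t. unfold e0. apply (circ_cont (GG z0) (GG' z0) z0 s).
    intros t'. destruct (geo z0 rho s 0 t' Hz ltac:(lra) ltac:(lra) ltac:(lra) ltac:(lra)) as [G1 G2].
    replace (gam z0 (- z0) s (rho - s) 0 t') with (z0 + RtoC s * E t')%C in G1, G2
      by (unfold gam; rewrite ?RtoC_plus, ?RtoC_mult, ?RtoC_minus; ring).
    apply GG_good; auto. }
  assert (Cg : forall t, continuous g t).
  { intros t. apply (@ex_derive_continuous R_AbsRing R_NormedModule). unfold g. auto_derive. auto. }
  replace (RInt e0 0 (2 * PI) - 2 * PI * fst (Rf z0)) with (RInt (fun t => e0 t - g t) 0 (2*PI)).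
  2:{ rewrite RI_minus by (apply exRI_cont; auto). unfold g. rewrite RInt_trig. reflexivity. }
  replace (2 * PI * eps) with ((2 * PI - 0) * eps) by ring.
  apply abs_RInt_le_const. pose proof PI_RGT_0; lra.
  { apply (ex_RInt_minus (V := R_NormedModule)); apply exRI_cont; auto. }
  intros t _. rewrite Pt.
  eapply Rle_trans; [apply Cmod_fst_le|].
  set (h := (RtoC s * E t)%C).
  assert (Ch : Cmod h = s) by (unfold h; rewrite Cmod_mult, Cmod_R, Cmod_E, Rabs_pos_eq; lra).
  rewrite Cmod_mult, Cmod_inv by (apply Hsn).
  specialize (Hd h ltac:(lra)). rewrite Ch in *.
  apply (Rmult_le_reg_r s); [lra|]. rewrite Rmult_assoc, Rinv_l by lra. lra.
Qed.
Lemma BP z0 rho : 0 < rho < 1 -> (forall t, (RtoC rho * E t)%C <> z0) ->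
  RInt (fun t => fst (Rf (RtoC rho * E t) * q1 z0 (RtoC rho * E t) * (RtoC rho * E t))%C) 0 (2*PI) =
  RInt (fun t => fst (GG z0 (RtoC rho * E t) * (RtoC rho * E t))%C) 0 (2*PI).
Proof.
  intros Hr Hne.
  assert (Cw : forall t, Cmod (RtoC rho * E t)%C < 1) by (intros t; rewrite Cmod_mult, Cmod_R, Cmod_E, Rabs_pos_eq; lra).
  set (H := fun v => snd (Tf (RtoC rho * E v) * q1 z0 (RtoC rho * E v))%C).
  set (d := fun t => fst (Rf (RtoC rho * E t) * q1 z0 (RtoC rho * E t) * (RtoC rho * E t))%C
                   - fst (GG z0 (RtoC rho * E t) * (RtoC rho * E t))%C).
  assert (Hd : forall t, is_derive H t (d t)).
  { intros t.
    assert (Hp : rd (fun v => RtoC rho * E v)%C t (0 * E t + RtoC rho * (Ci * E t))%C).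
    { apply (rd_mult (fun _ => RtoC rho) E). apply rd_const. apply rd_E. }
    destruct (HT _ (Cw t)) as [HT1 _].
    pose proof (rd_chain Tf _ t _ _ HT1 Hp) as H1.
    pose proof (rd_chain (q1 z0) _ t _ _ (hd_q1 z0 _ (Hne t)) Hp) as H2.
    pose proof (rd_snd _ _ _ (rd_mult _ _ _ _ _ H1 H2)) as H3.
    unfold H. eapply is_derive_val; [| exact H3].
    unfold d, GG. generalize (Rf (RtoC rho * E t)%C) (q1 z0 (RtoC rho * E t)%C) (Tf (RtoC rho * E t)%C).
    intros a b c. unfold E, Ci, RtoC. cunf. ring. }
  assert (Cd : forall t, continuous d t).
  { intros t. apply (continuous_minus (V := R_NormedModule)).
    - apply (circ_cont0 (fun w => Rf w * q1 z0 w)%C (fun w => Rf' w * q1 z0 w + Rf w * (- (q1 z0 w * q1 z0 w)))%C).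
      intros t'. destruct (HT _ (Cw t')) as [_ HR]. apply hd_mult; auto. apply hd_q1; auto.
    - apply (circ_cont0 (GG z0) (GG' z0)). intros t'. apply GG_good; auto. }
  assert (HI : is_RInt d 0 (2*PI) (minus (H (2*PI)) (H 0))).
  { apply (is_RInt_derive (V := R_CompleteNormedModule) H d). intros; apply Hd. intros; apply Cd. }
  apply (is_RInt_unique (V := R_CompleteNormedModule)) in HI.
  unfold H in HI.
  assert (E2 : E (2*PI) = E 0) by (unfold E; rewrite cos_2PI, sin_2PI, cos_0, sin_0; reflexivity).
  rewrite E2 in HI. unfold minus, plus, opp in HI; simpl in HI. rewrite Rplus_opp_r in HI.
  unfold d in HI. rewrite RI_minus in HI. lra.
  - apply exRI_cont. intros t. apply (circ_cont0 (fun w => Rf w * q1 z0 w)%C (fun w => Rf' w * q1 z0 w + Rf w * (- (q1 z0 w * q1 z0 w)))%C).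
    intros t'. destruct (HT _ (Cw t')) as [_ HR]. apply hd_mult; auto. apply hd_q1; auto.
  - apply exRI_cont. intros t. apply (circ_cont0 (GG z0) (GG' z0)). intros t'. apply GG_good; auto.
Qed.
Lemma Jcont z0 rho : 0 < rho < 1 -> (forall t, (RtoC rho * E t)%C <> z0) ->
  forall t0, continuous (fun t => fst (Rf (RtoC rho * E t) * q1 z0 (RtoC rho * E t) * (RtoC rho * E t))%C) t0.
Proof.
  intros Hr Hne t0.
  assert (Cw : forall t, Cmod (RtoC rho * E t)%C < 1) by (intros t; rewrite Cmod_mult, Cmod_R, Cmod_E, Rabs_pos_eq; lra).
  apply (circ_cont0 (fun w => Rf w * q1 z0 w)%C (fun w => Rf' w * q1 z0 w + Rf w * (- (q1 z0 w * q1 z0 w)))%C).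
  intros t'. destruct (HT _ (Cw t')) as [_ HR]. apply hd_mult; auto. apply hd_q1; auto.
Qed.

Lemma Cmod_circ rho t : 0 < rho -> Cmod (RtoC rho * E t)%C = rho.
Proof. intros H. rewrite Cmod_mult, Cmod_R, Cmod_E, Rabs_pos_eq; lra. Qed.

Lemma Harnack : Rf 0%C = 1%C -> (forall w, Cmod w < 1 -> 0 <= fst (Rf w)) ->
  forall z rho, Cmod z < rho < 1 -> (rho - Cmod z) / (rho + Cmod z) <= fst (Rf z).
Proof.
  intros HR0 Hpos z rho Hz. pose proof (Cmod_ge_0 z) as Hz0'.
  destruct (Ceq_dec z 0) as [->|Hz0].
  { rewrite HR0, Cmod_0. simpl. replace ((rho-0)/(rho+0)) with 1 by (field; lra). lra. }
  assert (Hr : 0 < rho < 1) by lra.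
  pose proof (Cmod_pos z Hz0) as Hzp.
  set (zs := (RtoC (rho*rho) * / Cconj z)%C).
  assert (Czs : Cmod zs = rho * rho / Cmod z).
  { unfold zs. rewrite Cmod_mult, Cmod_R, Cmod_inv, Cmod_conj, Rabs_pos_eq. reflexivity. nra.
    intro E1. apply Hz0. rewrite <- (Cconj_conj z), E1. apply injective_projections; simpl; ring. }
  assert (Czs' : rho < Cmod zs).
  { rewrite Czs. apply (Rmult_lt_reg_r (Cmod z)); auto. unfold Rdiv. rewrite Rmult_assoc, Rinv_l by lra. nra. }
  assert (ne1 : forall t, (RtoC rho * E t)%C <> z) by (intros t E1; pose proof (Cmod_circ rho t ltac:(lra)); rewrite E1 in H; lra).
  assert (ne2 : forall t, (RtoC rho * E t)%C <> zs) by (intros t E1; pose proof (Cmod_circ rho t ltac:(lra)); rewrite E1 in H; lra).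
  assert (ne0 : forall t, (RtoC rho * E t)%C <> 0%C) by (intros t E1; pose proof (Cmod_circ rho t ltac:(lra)); rewrite E1, Cmod_0 in H; lra).
  assert (A1 := BP z rho Hr ne1). rewrite (CauchyIn z rho Hz) in A1.
  assert (A2 := BP zs rho Hr ne2). rewrite (CauchyOut zs rho Hr Czs') in A2.
  assert (A0 := BP 0 rho Hr ne0). rewrite (CauchyIn 0 rho ltac:(rewrite Cmod_0; lra)), HR0 in A0. change (fst (RtoC 1)) with 1 in A0.
  destruct z as [p q].
  set (W := fun t => (RtoC rho * E t)%C).
  set (Pf := fun t => fst (Rf (W t)) * ((rho*cos t * (rho*cos t) + rho*sin t*(rho*sin t)) - (p*p+q*q))
                     / ((rho*cos t - p)*(rho*cos t - p)+(rho*sin t - q)*(rho*sin t - q))).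
  assert (Pt : forall t, fst (Rf (W t) * q1 (p,q) (W t) * W t)%C - fst (Rf (W t) * q1 zs (W t) * W t)%C = Pf t).
  { intros t. unfold Pf, W. 
    assert (Ex : rho * cos t * (rho * cos t) + rho * sin t * (rho * sin t) = rho * rho)
      by (pose proof (sin2_cos2 t) as H; unfold Rsqr in H; nra).
    assert (Ezs : zs = (RtoC (rho * cos t * (rho * cos t) + rho * sin t * (rho * sin t)) * / Cconj (p, q))%C) by (rewrite Ex; reflexivity).
    pose proof (ne1 t) as N1. pose proof (ne2 t) as N2.
    rewrite Ezs in *. rewrite E_pair in *. destruct (Rf (rho * cos t, rho * sin t)) as [U V].
    apply herg_id; auto. apply Cminus_neq; auto. apply Cminus_neq; auto. }
  assert (I1 : RInt Pf 0 (2*PI) = 2 * PI * fst (Rf (p, q))).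
  { rewrite <- (RInt_ext _ _ 0 (2*PI) (fun t _ => Pt t)). rewrite RI_minus. unfold W. rewrite A1, A2. apply Rminus_0_r.
    apply exRI_cont. apply Jcont; auto. apply exRI_cont. apply Jcont; auto. }
  assert (Q0 : forall t, fst (Rf (W t)) = fst (Rf (W t) * q1 0 (W t) * W t)%C).
  { intros t. f_equal. unfold q1. field. replace (W t - 0)%C with (W t) by ring. apply ne0. }
  set (m := (rho - Cmod (p, q)) / (rho + Cmod (p, q))).
  assert (I2 : RInt (fun t => m * fst (Rf (W t))) 0 (2*PI) = m * (2 * PI)).
  { rewrite (RInt_ext _ (fun t => scal m (fst (Rf (W t) * q1 0 (W t) * W t)%C))).
    rewrite (RInt_scal (V := R_CompleteNormedModule)). unfold W. rewrite A0. unfold scal; simpl. unfold mult; simpl. rewrite Rmult_1_r. reflexivity.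
    apply exRI_cont. apply Jcont; auto.
    intros t _. rewrite <- Q0. reflexivity. }
  assert (Le : RInt (fun t => m * fst (Rf (W t))) 0 (2*PI) <= RInt Pf 0 (2*PI)).
  { apply RInt_le. pose proof PI_RGT_0; lra.
    - apply (ex_RInt_ext (fun t => scal m (fst (Rf (W t) * q1 0 (W t) * W t)%C))).
      intros t _. rewrite <- Q0. reflexivity.
      apply (ex_RInt_scal (V := R_NormedModule)). apply exRI_cont. apply Jcont; auto.
    - apply (ex_RInt_ext (fun t => fst (Rf (W t) * q1 (p,q) (W t) * W t)%C - fst (Rf (W t) * q1 zs (W t) * W t)%C)).
      intros t _. apply Pt.
      apply (ex_RInt_minus (V := R_NormedModule)); apply exRI_cont; apply Jcont; auto.
    - intros t _. unfold Pf, m.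
      assert (Ex : rho * cos t * (rho * cos t) + rho * sin t * (rho * sin t) = rho * rho)
        by (pose proof (sin2_cos2 t) as H; unfold Rsqr in H; nra).
      assert (HU : 0 <= fst (Rf (W t))) by (apply Hpos; unfold W; rewrite Cmod_circ; lra).
      assert (Cd : Cmod (W t - (p, q))%C = sqrt ((rho*cos t - p)*(rho*cos t - p)+(rho*sin t - q)*(rho*sin t - q))).
      { unfold W. rewrite E_pair. rewrite <- Cmod_pair. f_equal; try (apply injective_projections; simpl; ring). }
      assert (Ct : Cmod (W t - (p, q))%C <= rho + Cmod (p, q)).
      { eapply Rle_trans. apply Cmod_triangle. rewrite Cmod_opp. unfold W. rewrite Cmod_circ; lra. }
      rewrite Cmod_pair in *. rewrite Cd in Ct.
      apply poisson_lb; auto.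
      + lra.
      + pose proof (ne1 t) as N. fold (W t) in N.
        assert (D0 : 0 <= (rho*cos t - p)*(rho*cos t - p)+(rho*sin t - q)*(rho*sin t - q)) by (apply Rplus_le_le_0_compat; apply Rle_0_sqr).
        destruct (Rle_lt_or_eq_dec _ _ D0) as [|D1]; auto. exfalso. symmetry in D1. apply sq0 in D1.
        apply N. unfold W. rewrite E_pair. apply injective_projections; simpl; lra. }
  rewrite I1, I2 in Le. pose proof PI_RGT_0. nra.
Qed.
End Cauchy.

Lemma leftmin (f : R -> R) x l : is_derive f x l -> 0 < x -> (forall c, 0 <= c <= x -> f x <= f c) -> l <= 0.
Proof.
  intros Hd Hx Hm. destruct (Rle_dec l 0) as [|Hl]; auto. exfalso.
  apply is_derive_Reals in Hd.
  destruct (Hd (l/2) ltac:(lra)) as [del Hdel].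
  set (h := - (Rmin del x) / 2).
  assert (Hm1 : 0 < Rmin del x) by (apply Rmin_glb_lt; [apply cond_pos|lra]).
  pose proof (Rmin_l del x). pose proof (Rmin_r del x).
  assert (Hh : h <> 0) by (unfold h; lra).
  assert (Hh2 : Rabs h < del) by (unfold h; rewrite Rabs_left by lra; lra).
  specialize (Hdel h Hh Hh2).
  specialize (Hm (x + h) ltac:(unfold h; lra)).
  apply Rabs_def2 in Hdel. destruct Hdel as [_ Hdel].
  assert (Hq : (f (x + h) - f x) / h > l/2) by lra.
  assert (Hn : h < 0) by (unfold h; lra).
  assert (f (x + h) - f x < 0).
  { apply (Rmult_lt_reg_r (- / h)). apply Ropp_gt_lt_0_contravar. apply Rinv_lt_0_compat; lra.
    unfold Rdiv in Hq. nra. }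
  lra.
Qed.

Lemma mono01 (h h' : R -> R) : (forall x, 0 <= x <= 1 -> is_derive h x (h' x)) -> (forall x, 0 <= x <= 1 -> 0 <= h' x) ->
  forall y, 0 <= y <= 1 -> h 0 <= h y.
Proof.
  intros Hd Hp y Hy.
  destruct (Req_dec y 0) as [->|Hy0]; [lra|].
  destruct (MVT_gen h 0 y h') as [c [Hc E1]].
  - intros x Hx. rewrite Rmin_left, Rmax_right in Hx by lra. apply Hd. lra.
  - intros x Hx. rewrite Rmin_left, Rmax_right in Hx by lra. apply continuity_pt_filterlim.
    apply (@ex_derive_continuous R_AbsRing R_NormedModule). eexists. apply Hd. lra.
  - rewrite Rmin_left, Rmax_right in Hc by lra. specialize (Hp c ltac:(lra)). nra.
Qed.

Lemma pos_R (gamma delta lambda : R) (F1 F2 F3 : C -> C) :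
  0 <= lambda -> lambda < gamma -> gamma <= delta ->
  (forall w, Cmod w < 1 -> hd F1 w (F2 w) /\ hd F2 w (F3 w)) -> F1 0%C = 1%C ->
  (forall z : C, Cmod z < 1 ->
    Re (RtoC gamma * F1 z + RtoC delta * z * F2 z
        + RtoC ((delta - gamma) / 2) * (z * z) * F3 z) > lambda) ->
  forall zeta, Cmod zeta < 1 -> 0 < fst (F1 zeta + zeta * F2 zeta)%C.
Proof.
  intros Hl Hlg Hgd HF H10 Hp zeta Hz.
  set (Rf := fun w => (F1 w + w * F2 w)%C). set (Rf' := fun w => (F2 w + (1 * F2 w + w * F3 w))%C).
  assert (Hin : forall x, 0 <= x <= 1 -> Cmod (RtoC x * zeta)%C < 1).
  { intros x Hx. rewrite Cmod_mult, Cmod_R, Rabs_pos_eq by lra. pose proof (Cmod_ge_0 zeta). nra. }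
  assert (HRd : forall w, Cmod w < 1 -> hd Rf w (Rf' w)).
  { intros w Hw. destruct (HF w Hw) as [H1 H2]. unfold Rf, Rf'. apply hd_plus; auto. apply hd_mult; auto. apply hd_id. }
  set (u := fun y => fst (Rf (RtoC y * zeta)%C)).
  set (u' := fun x => fst ((1 * zeta + RtoC x * 0) * Rf' (RtoC x * zeta))%C).
  assert (Hu : forall x, 0 <= x <= 1 -> is_derive u x (u' x)).
  { intros x Hx. unfold u, u'. apply rd_fst.
    apply (rd_chain Rf (fun y => RtoC y * zeta)%C). apply HRd. apply Hin; auto.
    apply (rd_mult (fun y => RtoC y) (fun _ => zeta)). apply rd_id. apply rd_const. }
  set (k := (delta - gamma) / 2).
  assert (Hk : 0 <= k) by (unfold k; lra).
  assert (Hpu : forall x, 0 <= x <= 1 -> lambda < gamma * u x + k * x * u' x).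
  { intros x Hx. specialize (Hp _ (Hin x Hx)).
    assert (Ed : RtoC delta = (RtoC gamma + RtoC 2 * RtoC k)%C) by (unfold k; apply injective_projections; simpl; field).
    rewrite Ed in Hp. unfold Re in Hp. unfold u, u', Rf, Rf'.
    replace (gamma * fst (F1 (RtoC x * zeta) + RtoC x * zeta * F2 (RtoC x * zeta))%C +
      k * x * fst ((1 * zeta + RtoC x * 0) * (F2 (RtoC x * zeta) + (1 * F2 (RtoC x * zeta) + RtoC x * zeta * F3 (RtoC x * zeta))))%C)
    with (fst (RtoC gamma * F1 (RtoC x * zeta) + (RtoC gamma + RtoC 2 * RtoC k) * (RtoC x * zeta) * F2 (RtoC x * zeta) +
       RtoC k * (RtoC x * zeta * (RtoC x * zeta)) * F3 (RtoC x * zeta))%C).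
    unfold k in *. exact Hp.
    unfold RtoC. cunf. ring. }
  assert (U0 : u 0 = 1).
  { unfold u, Rf. rewrite Cmult_0_l, H10, Cmult_0_l, Cplus_0_r. reflexivity. }
  assert (U1 : u 1 = fst (F1 zeta + zeta * F2 zeta)%C) by (unfold u, Rf; rewrite Cmult_1_l; reflexivity).
  rewrite <- U1.
  destruct (Rlt_dec 0 (u 1)) as [|Hn]; auto. exfalso.
  destruct (continuity_ab_min u 0 1 ltac:(lra)) as [xm [Hxm Hxr]].
  { intros c Hc. apply continuity_pt_filterlim. apply (@ex_derive_continuous R_AbsRing R_NormedModule). eexists. apply Hu. auto. }
  assert (Hxm1 : u xm <= u 1) by (apply Hxm; lra).
  assert (Hx0 : 0 < xm).
  { destruct (Req_dec xm 0) as [E1|]; [|lra]. rewrite E1, U0 in Hxm1. lra. }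
  assert (Hd : u' xm <= 0).
  { apply (leftmin u xm); auto. intros c Hc. apply Hxm. lra. }
  specialize (Hpu xm Hxr).
  assert (k * xm * u' xm <= 0).
  { assert (0 <= k * xm) by nra. nra. }
  nra.
Qed.

Lemma isd_minus (f g : R -> R) x a c : is_derive f x a -> is_derive g x c -> is_derive (fun y => f y - g y) x (a - c).
Proof. intros Hf Hg. apply (is_derive_minus f g x a c Hf Hg). Qed.

Theorem lemma14 (gamma delta lambda : R) (F F1 F2 F3 : C -> C) :
  0 <= lambda -> lambda < gamma -> gamma <= delta ->
  classR gamma delta lambda F F1 F2 F3 ->
  forall z : C, in_U z -> Re (Fquot F z) > 1 / 2.
Proof.
  intros Hl Hlg Hgd [[[HF0 [HF1 HF2]] [F00 F10]] Hp] z Hz.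
  unfold in_U in Hz. unfold Fquot. destruct (Ceq_dec z 0) as [_|Hz0].
  { simpl. lra. }
  assert (HF : forall w, Cmod w < 1 -> hd F1 w (F2 w) /\ hd F2 w (F3 w)).
  { intros w Hw. split; [apply HF1 | apply HF2]; exact Hw. }
  set (Tf := fun w => (w * F1 w)%C). set (Rf := fun w => (F1 w + w * F2 w)%C).
  set (Rf' := fun w => (F2 w + (1 * F2 w + w * F3 w))%C).
  assert (HT : forall w, Cmod w < 1 -> hd Tf w (Rf w) /\ hd Rf w (Rf' w)).
  { intros w Hw. destruct (HF w Hw) as [H1 H2]. split.
    - eapply hd_ext; [intros; reflexivity | | apply (hd_mult (fun w => w) F1 w _ _ (hd_id w) H1)]. unfold Rf. ring.
    - unfold Rf, Rf'. apply hd_plus; auto. apply hd_mult; auto. apply hd_id. }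
  assert (HR0 : Rf 0%C = 1%C) by (unfold Rf; rewrite F10, Cmult_0_l, Cplus_0_r; reflexivity).
  assert (Hpos : forall w, Cmod w < 1 -> 0 <= fst (Rf w)).
  { intros w Hw. apply Rlt_le. unfold Rf. apply (pos_R gamma delta lambda F1 F2 F3); auto. }
  pose proof (Harnack Tf Rf Rf' HT HR0 Hpos) as Hh.
  pose proof (Cmod_pos z Hz0) as Hr0.
  assert (Hin : forall x, 0 <= x <= 1 -> Cmod (RtoC x * z)%C = x * Cmod z).
  { intros x Hx. rewrite Cmod_mult, Cmod_R, Rabs_pos_eq by lra. reflexivity. }
  assert (Hlow : forall x, 0 <= x <= 1 -> 1 - 2*x + 2*x*x - 2*x*x*x <= fst (Rf (RtoC x * z)%C)).
  { intros x Hx. specialize (Hh (RtoC x * z)%C ((1 + Cmod z)/2)). rewrite Hin in Hh by auto.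
    assert (Hxr : x * Cmod z <= Cmod z) by nra.
    specialize (Hh ltac:(lra)).
    eapply Rle_trans; [| exact Hh].
    assert (A : (1 - x) / (1 + x) <= ((1 + Cmod z) / 2 - x * Cmod z) / ((1 + Cmod z) / 2 + x * Cmod z)).
    { apply (Rmult_le_reg_r ((1 + x) * ((1 + Cmod z) / 2 + x * Cmod z))). nra.
      replace ((1 - x) / (1 + x) * ((1 + x) * ((1 + Cmod z) / 2 + x * Cmod z))) with ((1 - x) * ((1 + Cmod z) / 2 + x * Cmod z)) by (field; lra).
      replace (((1 + Cmod z) / 2 - x * Cmod z) / ((1 + Cmod z) / 2 + x * Cmod z) * ((1 + x) * ((1 + Cmod z) / 2 + x * Cmod z)))
        with (((1 + Cmod z) / 2 - x * Cmod z) * (1 + x)) by (field; nra).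
      nra. }
    assert (B : 1 - 2*x + 2*x*x - 2*x*x*x <= (1 - x) / (1 + x)).
    { apply (Rmult_le_reg_r (1 + x)). lra.
      replace ((1 - x) / (1 + x) * (1 + x)) with (1 - x) by (field; lra). nra. }
    lra. }
  set (b := fun x => fst (RtoC x * F1 (RtoC x * z))%C).
  assert (Hb : forall x, 0 <= x <= 1 -> is_derive b x (fst (Rf (RtoC x * z)%C))).
  { intros x Hx. unfold b.
    assert (Hpath : rd (fun y => RtoC y * z)%C x (1 * z + RtoC x * 0)%C).
    { apply (rd_mult (fun y => RtoC y) (fun _ => z)). apply rd_id. apply rd_const. }
    assert (Cx : Cmod (RtoC x * z)%C < 1) by (rewrite Hin by auto; nra).
    pose proof (rd_chain F1 _ x _ _ (proj1 (HF _ Cx)) Hpath) as H1.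
    pose proof (rd_fst _ _ _ (rd_mult (fun y => RtoC y) _ x _ _ (rd_id x) H1)) as H2.
    eapply is_derive_val; [| exact H2]. unfold Rf. unfold RtoC. cunf. ring. }
  set (Q := fun x => x - x*x + 2*x*x*x/3 - x*x*x*x/2).
  assert (HbQ : forall y, 0 <= y <= 1 -> Q y <= b y).
  { intros y Hy.
    pose proof (mono01 (fun x => b x - Q x) (fun x => fst (Rf (RtoC x * z)%C) - (1 - 2*x + 2*x*x - 2*x*x*x))) as M.
    lapply M.
    2:{ intros x Hx. cbv beta. apply isd_minus. apply Hb; auto. unfold Q. auto_derive; auto. field. }
    clear M; intro M. lapply M.
    2:{ intros x Hx. specialize (Hlow x Hx). lra. }
    clear M; intro M. specialize (M y Hy).
    assert (b 0 = 0) by (unfold b; simpl; ring). unfold Q in *. lra. }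
  assert (HF1low : forall x, 0 <= x <= 1 -> 1 - x + 2*x*x/3 - x*x*x/2 <= fst (F1 (RtoC x * z)%C)).
  { intros x Hx. destruct (Req_dec x 0) as [->|Hx0].
    - rewrite Cmult_0_l, F10. simpl. lra.
    - specialize (HbQ x Hx). unfold b, Q in HbQ. 
      replace (fst (RtoC x * F1 (RtoC x * z))%C) with (x * fst (F1 (RtoC x * z)%C)) in HbQ by (unfold RtoC; cunf; ring).
      apply (Rmult_le_reg_l x). lra. nra. }
  set (a := fun x => fst (F (RtoC x * z) * / z)%C).
  assert (Ha : forall x, 0 <= x <= 1 -> is_derive a x (fst (F1 (RtoC x * z)%C))).
  { intros x Hx. unfold a.
    assert (Hpath : rd (fun y => RtoC y * z)%C x (1 * z + RtoC x * 0)%C).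
    { apply (rd_mult (fun y => RtoC y) (fun _ => z)). apply rd_id. apply rd_const. }
    assert (Cx : Cmod (RtoC x * z)%C < 1) by (rewrite Hin by auto; nra).
    pose proof (rd_chain F _ x _ _ (HF0 _ Cx) Hpath) as H1.
    pose proof (rd_fst _ _ _ (rd_mult _ (fun _ => / z)%C x _ _ H1 (rd_const _ x))) as H2.
    eapply is_derive_val; [| exact H2]. f_equal. cbv beta. field. auto. }
  set (Q2 := fun x => x - x*x/2 + 2*x*x*x/9 - x*x*x*x/8).
  pose proof (mono01 (fun x => a x - Q2 x) (fun x => fst (F1 (RtoC x * z)%C) - (1 - x + 2*x*x/3 - x*x*x/2))) as M.
  lapply M.
  2:{ intros x Hx. cbv beta. apply isd_minus. apply Ha; auto. unfold Q2. auto_derive; auto. field. }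
  clear M; intro M. lapply M.
  2:{ intros x Hx. specialize (HF1low x Hx). lra. }
  clear M; intro M. specialize (M 1 ltac:(lra)).
  assert (a 0 = 0) by (unfold a; rewrite Cmult_0_l, F00, Cmult_0_l; reflexivity).
  assert (a 1 = Re (F z / z)%C) by (unfold a, Re, Cdiv; rewrite Cmult_1_l; reflexivity).
  unfold Q2 in M. lra.
Qed.
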